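(* Let $g:[0,1]\to[0,1]$ be such that $g|_{\mathcal{X}_n}\in\mathcal{G}_n^{(d)}$ and $g\in C^\alpha[0,1]$ with $\alpha\ge p\ge1$, where $p$ is the order of the chosen quadrature rule, and assume $E_n^{(p)}[g]\le C_p\,2^{-pn}\|g^{(p)}\|_\infty$. Fix $\delta\in(0,1)$. To achieve total integration error $|I[g]-\hat a|\le\varepsilon$ with probability at least $1-\delta$, the following resources suffice: \[ n\ge\frac1p\log_2\Bigl(\frac{2C_p\|g^{(p)}\|_\infty}{\varepsilon}\Bigr),\qquad M\ge\frac{2C_{\mathrm{est}}}{\varepsilon\sqrt\delta},\qquad\text{gate count per oracle call}=\sum_{k=0}^{d}\binom{n}{k}. \] Substituting the minimal $n^*=\bigl\lceil\frac1p\log_2(2C_p\|g^{(p)}\|_\infty/\varepsilon)\bigr\rceil$ and taking $\delta$ a fixed constant, the total gate count across all $M$ oracle calls, as a function of $\varepsilon$ alone (for fixed $d$), is \[ \mathcal{O}\Bigl(\Bigl(\frac{\log(1/\varepsilon)}{p}\Bigr)^d\cdot\frac1\varepsilon\Bigr). \]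
   Context: $I[g]=\int_0^1g(x)\,dx$. For $n\ge1$, $\mathcal{X}_n=\{i/2^n:i=0,\dots,2^n-1\}$; $Q_n^{(p)}[g]$ denotes the approximation of $I[g]$ by a quadrature rule of order $p$ on $\mathcal{X}_n$, and $E_n^{(p)}[g]=|I[g]-Q_n^{(p)}[g]|$; $C_p>0$ is a constant depending only on $p$. The angle map of $h:\mathcal{X}_n\to[0,1]$ is $\Theta_h(b)=2\arcsin\sqrt{h(x_{i(b)})}$, $b\in\{0,1\}^n$, $i(b)=\sum_kb_k2^k$; $\mathcal{G}_n^{(d)}$ is the set of $h$ whose angle map, written as a multilinear polynomial $\sum_{S\subseteq\{0,\dots,n-1\}}c_S\prod_{j\in S}b_j$, has degree $\le d$. Quantum amplitude estimation setting: an amplitude oracle built from $g|_{\mathcal{X}_n}$ encodes the amplitude $a=Q_n^{(p)}[g]$, and each oracle call uses $\sum_{k=0}^d\binom nk$ controlled-$R_Y$ gates (the monomial factorisation of the encoding operator). The maximum-likelihood amplitude estimator $\hat a$ with total oracle cost $M$ (number of Grover-iterate applications weighted by depth) is assumed to satisfy $\mathbb{E}[(\hat a-a)^2]^{1/2}\le C_{\mathrm{est}}/M$ for a constant $C_{\mathrm{est}}>0$, hence $\mathbb{P}(|\hat a-a|\le C_{\mathrm{est}}/(M\sqrt\delta))\ge1-\delta$ for every $\delta\in(0,1)$. *)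

(* Defs.v *)
From HB Require Import structures.
From mathcomp Require Import all_boot all_order all_algebra.
From mathcomp Require Import all_classical all_reals all_analysis.
From mathcomp Require Import zify.
Set Implicit Arguments.
Unset Strict Implicit.
Unset Printing Implicit Defensive.
Import Order.TTheory GRing.Theory Num.Theory.
Import numFieldNormedType.Exports.
Local Open Scope classical_set_scope.
Local Open Scope ring_scope.

Section Defs.
Variable R : realType.

Definition log2 (x : R) : R := ln x / ln 2.

Definition Iint (g : R -> R) : R :=
  Rintegral lebesgue_measure `[0%R, 1%R] g.

Definition gridpt (n i : nat) : R := i%:R / (2 ^+ n).

Definition grid_restrict (g : R -> R) (n : nat) : 'I_(2 ^ n) -> R :=
  fun i => g (gridpt n i).


Definition bits_index (n : nat) (b : {ffun 'I_n -> bool}) : nat :=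
  (\sum_(k < n) (b k : nat) * 2 ^ k)%N.

Lemma bits_index_lt n (b : {ffun 'I_n -> bool}) : (bits_index b < 2 ^ n)%N.
Proof.
rewrite /bits_index; elim: n b => [|n IH] b; first by rewrite big_ord0.
rewrite big_ord_recr /= expnS.
set b' := [ffun k : 'I_n => b (widen_ord (leqnSn n) k)].
have -> : (\sum_(i < n) (b (widen_ord (leqnSn n) i) : nat) * 2 ^ i =
           \sum_(i < n) (b' i : nat) * 2 ^ i)%N.
  by apply: eq_bigr => i _; rewrite /b' ffunE.
have := IH b'; case: (b ord_max) => /=; lia.
Qed.

Definition angle_map (n : nat) (h : 'I_(2 ^ n) -> R)
  (b : {ffun 'I_n -> bool}) : R :=
  2 * asin (Num.sqrt (h (Ordinal (bits_index_lt b)))).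

(* G_n^(d): the angle map, written as a multilinear polynomial
   sum_S c_S prod_{j in S} b_j, has degree <= d *)
Definition in_G (n d : nat) (h : 'I_(2 ^ n) -> R) : Prop :=
  exists c : {set 'I_n} -> R,
    (forall S : {set 'I_n}, (d < #|S|)%N -> c S = 0) /\
    forall b : {ffun 'I_n -> bool},
      angle_map h b = \sum_(S : {set 'I_n}) c S * \prod_(j in S) (b j)%:R.

Definition Calpha (alpha : R) (g : R -> R) : Prop :=
  let k := Num.truncn alpha in
  (forall j : nat, (j <= k)%N -> {within `[0%R, 1%R], continuous (derive1n j g)}) /\
  (forall j : nat, (j < k)%N -> forall x, x \in `]0%R, 1%R[ ->
       derivable (derive1n j g) x 1) /\
  exists C : R, forall x y, x \in `[0%R, 1%R] -> y \in `[0%R, 1%R] ->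
    `|derive1n k g x - derive1n k g y| <= C * powR `|x - y| (alpha - k%:R).

Definition supnorm_deriv (p : nat) (g : R -> R) : R :=
  sup [set `|derive1n p g x| | x in `[0%R, 1%R]].

Definition gates_per_call (n d : nat) : nat := (\sum_(k < d.+1) 'C(n, k))%N.

Definition total_gates (M n d : nat) : nat := (M * gates_per_call n d)%N.

(* ceiling of a real, as a natural number (0 for negative values) *)
Definition natceil (x : R) : nat := Num.truncn ((Num.ceil x)%:~R : R).

Definition nstar (p : nat) (Cp G eps : R) : nat :=
  natceil ((p%:R)^-1 * log2 (2 * Cp * G / eps)).
Definition Mstar (Cest delta eps : R) : nat :=
  natceil (2 * Cest / (eps * Num.sqrt delta)).

End Defs.
Arguments grid_restrict {R} g n.

(* Main.v *)
Require Import Defs.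
From HB Require Import structures.
From mathcomp Require Import all_boot all_order all_algebra.
From mathcomp Require Import all_classical all_reals all_analysis.
From mathcomp Require Import ring lra zify.
Import Order.TTheory GRing.Theory Num.Theory.
Import numFieldNormedType.Exports.
Local Open Scope classical_set_scope.
Local Open Scope ring_scope.

Lemma meas_dist (R : realType) (dT : measure_display) (T : measurableType dT)
  (P : probability T R) (X : {RV P >-> R}) (c r : R) :
  measurable [set w | `|X w - c| <= r].
Proof.
have -> : [set w | `|X w - c| <= r] = X @^-1` `[c - r, c + r].
  by apply/seteqP; split => w /=; rewrite in_itv /= ler_distl.
by rewrite -[X @^-1` _]setTI; apply: measurable_funPT => //; apply: measurable_itv.
Qed.

Lemma quad_err (R : realType) (p n : nat) (Cp S eps E : R) :
  (1 <= p)%N -> 0 < Cp -> 0 < eps ->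
  E <= Cp * 2 `^ (- (p%:R * n%:R)) * S ->
  (p%:R)^-1 * log2 (2 * Cp * S / eps) <= n%:R ->
  E <= eps / 2.
Proof.
move=> hp hCp heps hE hn.
have p0 : 0 < p%:R :> R by rewrite ltr0n.
have c0 : 0 < ln 2 :> R by apply: ln_gt0; lra.
set z := 2 `^ (p%:R * n%:R) : R.
have z0 : 0 < z by apply: powR_gt0; lra.
move: hE; rewrite powRN -/z => hE.
have [S0|S0] := leP S 0.
  apply: (le_trans hE); rewrite -mulrA.
  have : z^-1 * S <= 0 by rewrite pmulr_rle0 ?invr_gt0.
  move=> h; have : Cp * (z^-1 * S) <= 0 by rewrite pmulr_rle0.
  lra.
have a0 : 0 < 2 * Cp * S / eps by rewrite divr_gt0 // !mulr_gt0.
have hz : 2 * Cp * S / eps <= z.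
  rewrite -ler_ln ?posrE //.
  rewrite /z ln_powR.
  move: hn; rewrite /log2 mulrC -ler_pdivlMr ?invr_gt0 // invrK => hn.
  by rewrite [p%:R * _]mulrC -ler_pdivrMr.
apply: (le_trans hE).
rewrite ler_pdivlMr; last lra.
move: hz; rewrite ler_pdivrMr // => hz.
have -> : Cp / z * S * 2 = (2 * Cp * S) / z by field; exact: lt0r_neq0.
rewrite ler_pdivrMr //; lra.
Qed.

Lemma natceil_le (R : realType) (x : R) : 0 <= x -> (natceil x)%:R <= x + 1.
Proof.
move=> x0; rewrite /natceil.
have y0 : 0 <= (Num.ceil x)%:~R :> R.
  by rewrite ler0z ceil_ge0; lra.
have := ceil_itv x; rewrite intrD => /andP[h1 _].
apply: le_trans (_ : (Num.ceil x)%:~R <= _).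
  by rewrite truncn_le.
move: h1; rewrite (_ : (-1)%:~R = -1 :> R) //; lra.
Qed.

Lemma leq_expb (m n k : nat) : (m <= n)%N -> (m ^ k <= n ^ k)%N.
Proof. by move=> h; elim: k => // k IH; rewrite !expnS leq_mul. Qed.

Lemma ffact_le (n k : nat) : (n ^_ k <= n ^ k)%N.
Proof.
elim: k n => [|k IH] n; first by rewrite ffactn0 expn0.
rewrite ffactnS expnS leq_mul2l; apply/orP; right.
apply: leq_trans (IH _) _; apply: leq_expb; lia.
Qed.

Lemma bin_le_exp (n k : nat) : ('C(n, k) <= n ^ k)%N.
Proof.
apply: leq_trans (ffact_le n k); rewrite -bin_ffact.
by apply: leq_pmulr; apply: fact_gt0.
Qed.

Lemma gates_le (n d : nat) : (gates_per_call n d <= d.+1 * n.+1 ^ d)%N.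
Proof.
rewrite /gates_per_call.
apply: leq_trans (_ : (\sum_(k < d.+1) n.+1 ^ d <= _)%N).
  apply: leq_sum => k _.
  apply: leq_trans (bin_le_exp n k) _.
  apply: leq_trans (_ : n.+1 ^ k <= _)%N; first by apply: leq_expb; lia.
  by apply: leq_pexp2l => //; rewrite -ltnS.
by rewrite sum_nat_const card_ord.
Qed.

Lemma gate_bound (R : realType) (p d : nat) (Cp Cest delta S eps : R) :
 (1 <= p)%N -> 0 < Cp -> 0 < Cest -> 0 < delta ->
 0 < eps -> eps <= expR (- (`|ln (2 * Cp * S)| + 1)) ->
 (total_gates (Mstar Cest delta eps) (nstar p Cp S eps) d)%:R
   <= ((2 * Cest / Num.sqrt delta + 1) * d.+1%:R * (2 / ln 2 + 2 * p%:R) ^+ d)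
      * ((ln eps^-1 / p%:R) ^+ d / eps).
Proof.
move=> hp hCp hCest hdel heps heps1.
set A : R := `|ln (2 * Cp * S)|.
rewrite -/A in heps1.
set L := ln eps^-1.
set c := ln (2 : R).
set B := 2 * Cest / Num.sqrt delta.
set K := 2 / c + 2 * p%:R.
have c0 : 0 < c by apply: ln_gt0; lra.
have p0 : 0 < p%:R :> R by rewrite ltr0n.
have A0 : 0 <= A by apply: normr_ge0.
have sd0 : 0 < Num.sqrt delta by rewrite sqrtr_gt0.
have B0 : 0 <= B by apply: divr_ge0 => //; lra.
have hL : A + 1 <= L.
  rewrite /L lnV ?posrE //.
  have : ln eps <= ln (expR (- (A + 1))) by rewrite ler_ln ?posrE ?expR_gt0.
  rewrite expRK; lra.
have e1 : eps <= 1.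
  apply: le_trans heps1 _; rewrite expR_le1; lra.
have ie1 : 1 <= eps^-1 by rewrite invf_ge1.
have hM : (Mstar Cest delta eps)%:R <= (B + 1) / eps.
  rewrite /Mstar.
  have x0 : 0 <= 2 * Cest / (eps * Num.sqrt delta).
    by apply: divr_ge0; [lra| apply: mulr_ge0; lra].
  apply: le_trans ((@natceil_le _ _ x0)) _.
  have -> : 2 * Cest / (eps * Num.sqrt delta) = B / eps.
    by rewrite /B; field; apply/andP; split; apply: lt0r_neq0.
  rewrite mulrDl mul1r; lra.
have hl : 0 <= ln (2 * Cp * S / eps) <= 2 * L.
  have [a0|a0] := ltP 0 (2 * Cp * S).
    rewrite lnM ?posrE ?invr_gt0 // -/L.
    have /andP[h1 h2] : - A <= ln (2 * Cp * S) <= A by rewrite -ler_norml.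
    apply/andP; split; lra.
  rewrite ln0; last by apply: mulr_le0_ge0 => //; rewrite invr_ge0; lra.
  lra.
move: hl => /andP[hl1 hl2].
set u := L / p%:R.
have hu : p%:R * u = L by rewrite /u; field; apply: lt0r_neq0.
have u0 : 0 <= u by apply: divr_ge0; lra.
have hN : (nstar p Cp S eps).+1%:R <= K * u.
  rewrite /nstar.
  set x := p%:R^-1 * log2 (2 * Cp * S / eps).
  have hx : 0 <= x <= 2 / c * u.
    rewrite /x /log2; apply/andP; split.
      apply: mulr_ge0; first by rewrite invr_ge0; lra.
      by apply: divr_ge0 => //; exact: ltW.
    apply: le_trans (_ : p%:R^-1 * (2 * L / c) <= _).
      apply: ler_wpM2l; first by rewrite invr_ge0; lra.
      by apply: ler_wpM2r; [rewrite invr_ge0; exact: ltW c0 | ].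
    by rewrite /u; rewrite le_eqVlt; apply/orP; left; apply/eqP; field; apply/andP; split; apply: lt0r_neq0.
  move: hx => /andP[hx1 hx2].
  have := (@natceil_le _ _ hx1); rewrite -natr1 /K mulrDl.
  have : 2 <= 2 * p%:R * u by rewrite -mulrA hu; lra.
  lra.
have hG : (gates_per_call (nstar p Cp S eps) d)%:R <= d.+1%:R * (K * u) ^+ d.
  apply: le_trans (_ : (d.+1 * (nstar p Cp S eps).+1 ^ d)%:R <= _).
    by rewrite ler_nat; apply: gates_le.
  rewrite natrM natrX; apply: ler_wpM2l; first by apply: ler0n.
  by apply: lerXn2r; rewrite ?nnegrE //; apply: le_trans hN.
rewrite /total_gates natrM.
apply: le_trans (_ : (B + 1) / eps * (d.+1%:R * (K * u) ^+ d) <= _).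
  by apply: ler_pM => //.
by rewrite exprMn le_eqVlt; apply/orP; left; apply/eqP; field; apply: lt0r_neq0.
Qed.

Arguments quad_err {R p n Cp S eps E}.
Arguments gate_bound {R p} d {Cp Cest delta S eps}.

Lemma meas_dist2 (R : realType) (dT : measure_display) (T : measurableType dT)
  (P : probability T R) (X : {RV P >-> R}) (c r : R) :
  measurable [set w | `|c - X w| <= r].
Proof.
have -> : [set w | `|c - X w| <= r] = [set w | `|X w - c| <= r].
  by apply/seteqP; split => w /=; rewrite distrC.
exact: meas_dist.
Qed.

Theorem mainTheorem4 (R : realType) (p d : nat) (alpha Cp Cest delta : R)
  (g : R -> R) (Q : nat -> (R -> R) -> R) :
  (1 <= p)%N -> p%:R <= alpha -> 0 < Cp -> 0 < Cest -> 0 < delta < 1 ->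
  (forall x, x \in `[0, 1] -> 0 <= g x <= 1) ->
  Calpha alpha g ->
  (* (1) sufficient resources *)
  (forall (eps : R) (n M : nat), 0 < eps -> (1 <= n)%N ->
     in_G d (grid_restrict g n) ->
     `|Iint g - Q n g| <= Cp * 2 `^ (- (p%:R * n%:R)) * supnorm_deriv p g ->
     (p%:R)^-1 * log2 (2 * Cp * supnorm_deriv p g / eps) <= n%:R ->
     2 * Cest / (eps * Num.sqrt delta) <= M%:R ->
     forall (dT : measure_display) (T : measurableType dT)
            (P : probability T R) (ahat : {RV P >-> R}),
       (forall delta' : R, 0 < delta' < 1 ->
          ((1 - delta')%:E <=
           P [set w | (`|ahat w - Q n g| <= Cest / (M%:R * Num.sqrt delta'))%R])%E) ->
       ((1 - delta)%:E <= P [set w | (`|Iint g - ahat w| <= eps)%R])%E)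
  /\
  (* (2) total gate count with minimal n*, M*, as eps -> 0+ *)
  (fun eps : R =>
     (total_gates (Mstar Cest delta eps)
                  (nstar p Cp (supnorm_deriv p g) eps) d)%:R : R)
    =O_ (0^'+) (fun eps : R => (ln (eps^-1) / p%:R) ^+ d / eps).
Proof.
move=> hp _ hCp hCest /andP[hd0 hd1] _ _; split.
  move=> eps n M heps _ _ hE hn hM dT T P ahat hprob.
  have hQ := quad_err hp hCp heps hE hn.
  have sd0 : 0 < Num.sqrt delta by rewrite sqrtr_gt0.
  have M0 : 0 < M%:R :> R.
    apply: lt_le_trans hM; apply: divr_gt0; first lra.
    exact: mulr_gt0.
  have hM' : Cest / (M%:R * Num.sqrt delta) <= eps / 2.
    rewrite ler_pdivrMr; last exact: mulr_gt0.
    move: hM; rewrite ler_pdivrMr; last exact: mulr_gt0.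
    move=> h; lra.
  have h := hprob delta (introT andP (conj hd0 hd1)).
  apply: (le_trans h); apply: le_measure; rewrite ?inE.
  - exact: meas_dist.
  - exact: meas_dist2.
  move=> w /= hw.
  apply: le_trans (ler_distD (Q n g) _ _) _.
  rewrite [`|Q n g - _|]distrC; lra.
set S := supnorm_deriv p g.
set K0 : R := (2 * Cest / Num.sqrt delta + 1) * d.+1%:R * (2 / ln 2 + 2 * p%:R) ^+ d.
have K00 : 0 <= K0.
  have c0 : 0 < ln (2 : R) by apply: ln_gt0; lra.
  have sd0 : 0 < Num.sqrt delta by rewrite sqrtr_gt0.
  rewrite /K0; apply: mulr_ge0; last apply: exprn_ge0.
    apply: mulr_ge0; last exact: ler0n.
    have : 0 <= 2 * Cest / Num.sqrt delta by apply: divr_ge0; lra.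
    lra.
  have : 0 <= 2 / ln (2 : R) by apply: divr_ge0; lra.
  have : 0 <= p%:R :> R by exact: ler0n.
  lra.
apply/eqOP.
near=> k.
near=> eps.
have h1 : 0 < eps by near: eps; exact: nbhs_right_gt.
have h2 : eps <= expR (- (`|ln (2 * Cp * S)| + 1)).
  by near: eps; apply: nbhs_right_le; exact: expR_gt0.
have hk : K0 <= k by near: k; apply: nbhs_pinfty_ge; rewrite num_real.
rewrite ger0_norm; last exact: ler0n.
apply: le_trans (gate_bound d hp hCp hCest hd0 h1 h2) _.
rewrite -/K0.
apply: le_trans (_ : K0 * `|(ln eps^-1 / p%:R) ^+ d / eps| <= _).
  by apply: ler_wpM2l => //; exact: ler_norm.
by apply: ler_wpM2r => //; exact: normr_ge0.
Unshelve. all: end_near.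
Qed.
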